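(* Let $k$ be a finite field, $r\ge2$, and $n\in\mathbb{N}$ with $n\le r$. For elements $b_1,\dots,b_n\in F_r$, the formula $\varphi(x_1,\dots,x_n)\equiv\bigwedge_{(\alpha_1,\dots,\alpha_n)\in k^n\setminus\{0\}}\neg\mathrm{Fit}(\alpha_1x_1+\dots+\alpha_nx_n)$, where $\mathrm{Fit}(x)\equiv\forall y\,(xyx=0)$, holds on $(b_1,\dots,b_n)$ in $F_r$ if and only if $b_1,\dots,b_n$ are linearly independent modulo $\mathrm{Fit}(F_r)$.
   Context: $F_r$ is the free metabelian Lie algebra over $k$ of rank $r$; products are left-normed; $\mathrm{Fit}(F_r)$ is its Fitting radical (sum of all nilpotent ideals), which equals the derived algebra $F_r^2$. *)

(* Defs.v *)
From HB Require Import structures.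
From mathcomp Require Import all_boot all_order all_algebra.
Set Implicit Arguments. Unset Strict Implicit. Unset Printing Implicit Defensive.
Import GRing.Theory.
Local Open Scope ring_scope.

Record LieAlg (k : fieldType) := {
  lie_carrier :> lmodType k;
  lie_br : lie_carrier -> lie_carrier -> lie_carrier;
  lie_brDl : forall x y z, lie_br (x + y) z = lie_br x z + lie_br y z;
  lie_brDr : forall x y z, lie_br x (y + z) = lie_br x y + lie_br x z;
  lie_brZl : forall (a : k) x y, lie_br (a *: x) y = a *: lie_br x y;
  lie_brZr : forall (a : k) x y, lie_br x (a *: y) = a *: lie_br x y;
  lie_br_alt : forall x, lie_br x x = 0;
  lie_jacobi : forall x y z,
    lie_br x (lie_br y z) + lie_br y (lie_br z x) + lie_br z (lie_br x y) = 0
}.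

Arguments lie_br {k} l x y : rename.

Definition metabelian (k : fieldType) (L : LieAlg k) : Prop :=
  forall a b c d : L, lie_br L (lie_br L a b) (lie_br L c d) = 0.

Definition lie_hom (k : fieldType) (L M : LieAlg k) (f : L -> M) : Prop :=
  [/\ forall x y : L, f (x + y) = f x + f y,
      forall (a : k) (x : L), f (a *: x) = a *: f x &
      forall x y : L, f (lie_br L x y) = lie_br M (f x) (f y)].

Definition is_free_metabelian (k : fieldType) (r : nat) (L : LieAlg k)
    (x : 'I_r -> L) : Prop :=
  metabelian L /\
  forall (M : LieAlg k), metabelian M -> forall m : 'I_r -> M,
    exists f : L -> M,
      [/\ lie_hom f, (forall i, f (x i) = m i) &
          forall g : L -> M, lie_hom g -> (forall i, g (x i) = m i) ->
            forall z, g z = f z].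

Definition lnprod (k : fieldType) (L : LieAlg k) (x0 : L) (s : seq L) : L :=
  foldl (lie_br L) x0 s.

Definition is_ideal (k : fieldType) (L : LieAlg k) (I : L -> Prop) : Prop :=
  [/\ I 0,
      forall x y, I x -> I y -> I (x + y),
      forall (a : k) x, I x -> I (a *: x) &
      forall x y, I x -> I (lie_br L x y)].

(* nilpotent ideal: some power I^c (spanned by left-normed products of
   c elements of I) vanishes *)
Definition nilpotent_ideal (k : fieldType) (L : LieAlg k) (I : L -> Prop) : Prop :=
  is_ideal I /\
  exists c : nat, forall (x0 : L) (s : seq L),
    size s = c -> I x0 -> (forall y, y \in s -> I y) -> lnprod x0 s = 0.

(* Fitting radical: the sum of all nilpotent ideals, i.e. the set of finite
   sums of elements each lying in some nilpotent ideal. *)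
Definition Fit (k : fieldType) (L : LieAlg k) (z : L) : Prop :=
  exists s : seq L,
    (forall y, y \in s -> exists I : L -> Prop, nilpotent_ideal I /\ I y) /\
    z = \sum_(y <- s) y.

Definition lin_indep_mod (k : fieldType) (L : LieAlg k) (S : L -> Prop)
    (n : nat) (b : 'I_n -> L) : Prop :=
  forall alpha : 'I_n -> k, S (\sum_(i < n) alpha i *: b i) ->
    forall i, alpha i = 0.

(* the first-order formula Fit(x) == forall y, x y x = 0 (left-normed) *)
Definition Fit_formula (k : fieldType) (L : LieAlg k) (x : L) : Prop :=
  forall y : L, lie_br L (lie_br L x y) x = 0.

Definition phi_formula (k : fieldType) (L : LieAlg k) (n : nat)
    (b : 'I_n -> L) : Prop :=
  forall alpha : 'I_n -> k, (exists i, alpha i != 0) ->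
    ~ Fit_formula (\sum_(i < n) alpha i *: b i).

(* Main.v *)
Require Import Defs.
From HB Require Import structures.
From mathcomp Require Import all_boot all_order all_algebra all_field.
From mathcomp Require Import ring.
From Stdlib Require Import ClassicalDescription.
Set Implicit Arguments. Unset Strict Implicit. Unset Printing Implicit Defensive.
Import GRing.Theory.
Local Open Scope ring_scope.

Lemma br0l (k : fieldType) (L : LieAlg k) (y : L) : lie_br L 0 y = 0.
Proof. by have := @lie_brZl _ L 0 0 y; rewrite !scale0r. Qed.
Lemma br0r (k : fieldType) (L : LieAlg k) (y : L) : lie_br L y 0 = 0.
Proof. by have := @lie_brZr _ L 0 y 0; rewrite !scale0r. Qed.

Lemma br_suml (k : fieldType) (L : LieAlg k) (I : Type) (s : seq I) (F : I -> L) y :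
  lie_br L (\sum_(i <- s) F i) y = \sum_(i <- s) lie_br L (F i) y.
Proof. elim: s => [|a s IH]; first by rewrite !big_nil br0l.
by rewrite !big_cons lie_brDl IH. Qed.
Lemma br_sumr (k : fieldType) (L : LieAlg k) (I : Type) (s : seq I) (F : I -> L) y :
  lie_br L y (\sum_(i <- s) F i) = \sum_(i <- s) lie_br L y (F i).
Proof. elim: s => [|a s IH]; first by rewrite !big_nil br0r.
by rewrite !big_cons lie_brDr IH. Qed.

Lemma hom0 (k : fieldType) (L M : LieAlg k) (f : L -> M) : lie_hom f -> f 0 = 0.
Proof. case=> _ hZ _. by have := hZ 0 0; rewrite !scale0r. Qed.

Lemma hom_sum (k : fieldType) (L M : LieAlg k) (f : L -> M) (I : Type) (s : seq I) (F : I -> L) :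
  lie_hom f -> f (\sum_(i <- s) F i) = \sum_(i <- s) f (F i).
Proof. move=> hf; elim: s => [|a s IH]; first by rewrite !big_nil hom0.
by rewrite !big_cons; case: hf => -> _ _; rewrite IH. Qed.

Lemma hom_lnprod (k : fieldType) (L M : LieAlg k) (f : L -> M) (s : seq L) x0 :
  lie_hom f -> f (lnprod x0 s) = lnprod (f x0) (map f s).
Proof. move=> hf; elim: s x0 => [|a s IH] x0 //=.
rewrite /lnprod /= -/(lnprod _ _) IH; case: hf => _ _ ->; done. Qed.

Definition Dset (k : fieldType) (L : LieAlg k) (z : L) : Prop :=
  exists s : seq (L * L), z = \sum_(p <- s) lie_br L p.1 p.2.

Lemma D0 (k : fieldType) (L : LieAlg k) : Dset (0 : L).
Proof. by exists [::]; rewrite big_nil. Qed.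
Lemma DD (k : fieldType) (L : LieAlg k) (u v : L) : Dset u -> Dset v -> Dset (u + v).
Proof. move=> [s ->] [t ->]; exists (s ++ t); by rewrite big_cat. Qed.
Lemma DZ (k : fieldType) (L : LieAlg k) a (u : L) : Dset u -> Dset (a *: u).
Proof. move=> [s ->]; exists (map (fun p => (a *: p.1, p.2)) s).
by rewrite big_map scaler_sumr; apply: eq_bigr => p _; rewrite lie_brZl. Qed.
Lemma Dbr (k : fieldType) (L : LieAlg k) (u v : L) : Dset (lie_br L u v).
Proof. by exists [:: (u, v)]; rewrite big_seq1. Qed.

Lemma D_abel (k : fieldType) (L : LieAlg k) (u v : L) : metabelian L ->
  Dset u -> Dset v -> lie_br L u v = 0.
Proof. move=> hm [s ->] [t ->]. rewrite br_suml big1 // => p _.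
rewrite br_sumr big1 // => q _; exact: hm. Qed.

Lemma D_nil (k : fieldType) (L : LieAlg k) : metabelian L -> nilpotent_ideal (@Dset k L).
Proof. move=> hm; split; first split.
- exact: D0.
- exact: DD.
- exact: DZ.
- move=> *; exact: Dbr.
exists 1%N => x0 [|y [|]] //= _ hx hy. rewrite /lnprod /=; apply: D_abel => //.
by apply: hy; rewrite inE.
Qed.

Lemma D_Fit (k : fieldType) (L : LieAlg k) (z : L) : metabelian L -> Dset z -> Fit z.
Proof. move=> hm hz; exists [:: z]; split; last by rewrite big_seq1.
move=> y; rewrite inE => /eqP ->; exists (@Dset k L); split => //; exact: D_nil. Qed.

Lemma D_FF (k : fieldType) (L : LieAlg k) (z : L) : metabelian L -> Dset z -> Fit_formula z.
Proof. move=> hm hz y; apply: D_abel => //; exact: Dbr. Qed.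

Definition Gset (k : fieldType) (L : LieAlg k) (r : nat) (x : 'I_r -> L) (z : L) : Prop :=
  exists c : 'I_r -> k, exists d, Dset d /\ z = \sum_(i < r) c i *: x i + d.

Definition Gb (k : fieldType) (L : LieAlg k) (r : nat) (x : 'I_r -> L) (z : L) : bool :=
  if excluded_middle_informative (Gset x z) then true else false.

Lemma GbP (k : fieldType) (L : LieAlg k) (r : nat) (x : 'I_r -> L) (z : L) :
  Gb x z <-> Gset x z.
Proof. rewrite /Gb; case: excluded_middle_informative => //. Qed.

Lemma G_lin (k : fieldType) (L : LieAlg k) (r : nat) (x : 'I_r -> L) a (u v : L) :
  Gset x u -> Gset x v -> Gset x (a *: u + v).
Proof.
move=> [c [d [hd ->]]] [c' [d' [hd' ->]]].
exists (fun i => a * c i + c' i), (a *: d + d'); split; first by apply: DD => //; exact: DZ.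
rewrite scalerDr scaler_sumr.
under [X in _ = X + _]eq_bigr => i _ do rewrite scalerDl -scalerA.
rewrite big_split /=. rewrite -!addrA; congr (_ + _).
by rewrite addrC -!addrA; congr (_ + _); rewrite addrC.
Qed.

Lemma G_br (k : fieldType) (L : LieAlg k) (r : nat) (x : 'I_r -> L) (u v : L) :
  Gset x (lie_br L u v).
Proof. exists (fun _ => 0), (lie_br L u v); split; first exact: Dbr.
by rewrite big1 ?add0r // => i _; rewrite scale0r. Qed.

Lemma G0 (k : fieldType) (L : LieAlg k) (r : nat) (x : 'I_r -> L) : Gset x 0.
Proof. rewrite -(br0l (0 : L)); exact: G_br. Qed.

Lemma Gx (k : fieldType) (L : LieAlg k) (r : nat) (x : 'I_r -> L) j : Gset x (x j).
Proof. exists (fun i => (i == j)%:R), 0; split; first exact: D0.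
rewrite addr0 (bigD1 j) //= eqxx scale1r big1 ?addr0 // => i /negbTE ->.
by rewrite scale0r. Qed.

Lemma Gb_closed (k : fieldType) (L : LieAlg k) (r : nat) (x : 'I_r -> L) :
  GRing.subsemimod_closed (Gb x).
Proof.
apply: GRing.submod_closed_semi; split; first by apply/GbP; exact: G0.
by move=> a u v /GbP hu /GbP hv; apply/GbP; exact: G_lin.
Qed.

HB.instance Definition _ (k : fieldType) (L : LieAlg k) (r : nat) (x : 'I_r -> L) :=
  GRing.isSubmodClosed.Build k L (Gb x) (Gb_closed x).

Record subG (k : fieldType) (L : LieAlg k) (r : nat) (x : 'I_r -> L) :=
  SubG { sv :> L; svP : Gb x sv }.

HB.instance Definition _ (k : fieldType) (L : LieAlg k) (r : nat) (x : 'I_r -> L) :=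
  [isSub for @sv k L r x].
HB.instance Definition _ (k : fieldType) (L : LieAlg k) (r : nat) (x : 'I_r -> L) :=
  [Choice of subG x by <:].
HB.instance Definition _ (k : fieldType) (L : LieAlg k) (r : nat) (x : 'I_r -> L) :=
  [SubChoice_isSubLmodule of subG x by <:].


Lemma svD (k : fieldType) (L : LieAlg k) (r : nat) (x : 'I_r -> L) (u v : subG x) :
  sv (u + v) = sv u + sv v.
Proof. by []. Qed.
Lemma svZ (k : fieldType) (L : LieAlg k) (r : nat) (x : 'I_r -> L) a (u : subG x) :
  sv (a *: u) = a *: sv u.
Proof. by []. Qed.
Lemma sv0 (k : fieldType) (L : LieAlg k) (r : nat) (x : 'I_r -> L) :
  sv (0 : subG x) = 0.
Proof. by []. Qed.

Definition subbr (k : fieldType) (L : LieAlg k) (r : nat) (x : 'I_r -> L) (u v : subG x) : subG x :=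
  SubG (proj2 (GbP x (lie_br L (sv u) (sv v))) (G_br x _ _)).

Lemma subbrE (k : fieldType) (L : LieAlg k) (r : nat) (x : 'I_r -> L) (u v : subG x) :
  sv (subbr u v) = lie_br L (sv u) (sv v).
Proof. by []. Qed.

Definition subLie (k : fieldType) (L : LieAlg k) (r : nat) (x : 'I_r -> L) : LieAlg k.
Proof.
refine (@Build_LieAlg k (subG x) (@subbr k L r x) _ _ _ _ _ _).
- by move=> a b c; apply: val_inj; exact: lie_brDl.
- by move=> a b c; apply: val_inj; exact: lie_brDr.
- by move=> a b c; apply: val_inj; exact: lie_brZl.
- by move=> a b c; apply: val_inj; exact: lie_brZr.
- by move=> a; apply: val_inj; exact: lie_br_alt.
- by move=> a b c; apply: val_inj; exact: lie_jacobi.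
Defined.

Lemma generation (k : fieldType) (L : LieAlg k) (r : nat) (x : 'I_r -> L) :
  is_free_metabelian x -> forall z, Gset x z.
Proof.
move=> [hm hu].
have hmS : metabelian (subLie x).
  by move=> a b c d; apply: val_inj; exact: hm.
have [f [hf fx _]] := hu (subLie x) hmS (fun i => SubG (proj2 (GbP x (x i)) (Gx x i))).
have [f0 [_ _ un]] := hu L hm x.
have hg : lie_hom (fun z => sv (f z)).
  case: hf => hD hZ hB; split.
  - by move=> a b; rewrite hD.
  - by move=> a b; rewrite hZ.
  - by move=> a b; rewrite hB.
have hid : lie_hom (fun z : L => z) by [].
move=> z; have e1 := un _ hid (fun i => erefl) z.
have e2 : sv (f z) = f0 z by apply: (un _ hg) => i; rewrite fx.
by rewrite /= in e1; rewrite e1 -e2; apply/GbP; exact: svP.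
Qed.

Definition MT (k : fieldType) := (k^o * {poly k})%type.

Definition Mbr (k : fieldType) (u v : MT k) : MT k :=
  (0, (u.1 : k)%:P * 'X * v.2 - (v.1 : k)%:P * 'X * u.2).

Definition Mlie (k : fieldType) : LieAlg k.
Proof.
refine (@Build_LieAlg k (MT k) (@Mbr k) _ _ _ _ _ _).
- move=> [a p] [b q] [c s]; rewrite /Mbr /=; congr pair; first by rewrite addr0.
  rewrite /= polyCD; ring.
- move=> [a p] [b q] [c s]; rewrite /Mbr /=; congr pair; first by rewrite addr0.
  rewrite /= polyCD; ring.
- move=> t [a p] [b q]; rewrite /Mbr /=; congr pair.
  + by rewrite [RHS]mulr0.
  + rewrite /= -!mul_polyC.
    have -> : (t *: a)%:P = t%:P * a%:P by rewrite -polyCM.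
    ring.
- move=> t [a p] [b q]; rewrite /Mbr /=; congr pair.
  + by rewrite [RHS]mulr0.
  + rewrite /= -!mul_polyC.
    have -> : (t *: b)%:P = t%:P * b%:P by rewrite -polyCM.
    ring.
- move=> [a p]; rewrite /Mbr /=; apply: (f_equal2 pair) => //=; ring.
- move=> [a p] [b q] [c s]; rewrite /Mbr /=; apply: (f_equal2 pair) => /=; first by ring.
  rewrite polyC0; ring.
Defined.

Lemma Mlie_meta (k : fieldType) : metabelian (Mlie k).
Proof. move=> [a p] [b q] [c s] [d t]; rewrite /= /Mbr /=.
apply: (f_equal2 pair) => //=; rewrite polyC0; ring. Qed.

Lemma M_lnprod (k : fieldType) (a : k) (q p : {poly k}) m :
  lnprod (L := Mlie k) ((0, p) : MT k) (nseq m ((a, q) : MT k)) = (0, ((-a)%:P * 'X) ^+ m * p).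
Proof.
elim: m p => [|m IH] p; first by rewrite expr0 mul1r.
rewrite /lnprod /= -/(lnprod _ _).
have -> : Mbr ((0, p) : MT k) (a, q) = (0, (-a)%:P * 'X * p).
  by rewrite /Mbr /=; apply: (f_equal2 pair) => //; rewrite polyC0 polyCN; ring.
by have := IH ((- a)%:P * 'X * p); rewrite /lnprod /= => ->; rewrite exprSr -!mulrA.
Qed.

Lemma fst_sum (k : fieldType) (I : Type) (s : seq I) (F : I -> MT k) :
  (\sum_(i <- s) F i).1 = \sum_(i <- s) (F i).1.
Proof. elim: s => [|a s IH]; first by rewrite !big_nil. by rewrite !big_cons /= IH. Qed.

Lemma key (k : fieldType) (L : LieAlg k) (r : nat) (x : 'I_r -> L) (z d : L)
  (c : 'I_r -> k) (j : 'I_r) (m : nat) :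
  is_free_metabelian x -> (2 <= r)%N -> Dset d -> z = \sum_(i < r) c i *: x i + d ->
  c j != 0 -> exists w, lnprod (lie_br L z w) (nseq m z) <> 0.
Proof.
move=> [hm hu] hr hd hz hc.
have [i hij] : exists i : 'I_r, i != j.
  have h0 : (0 < r)%N by apply: leq_trans hr.
  have h1 : (1 < r)%N by [].
  case: (eqVneq j (Ordinal h0)) => e; last by exists (Ordinal h0); rewrite eq_sym.
  by exists (Ordinal h1); rewrite e.
pose mm : 'I_r -> Mlie k := fun t => if t == j then ((1, 0) : MT k) else ((0, 1) : MT k).
have [h [hh hx _]] := hu (Mlie k) (@Mlie_meta k) mm.
exists (x i) => H.
have := hom_lnprod (nseq m z) (lie_br L z (x i)) hh.
rewrite H hom0 // map_nseq.
have e1 : (h z).1 = c j.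
    rewrite hz; case: (hh) => hD hZ _.
    rewrite hD hom_sum //= fst_sum.
  have -> : (h d).1 = 0.
    case: hd => s ->; rewrite hom_sum // fst_sum big1 // => p _.
    by case: (hh) => _ _ ->.
  rewrite addr0 (bigD1 j) //= big1 => [|t htj].
    by rewrite hZ hx /mm eqxx /= addr0; exact: mulr1.
  by rewrite hZ hx /mm (negbTE htj) /=; exact: mulr0.
case: (hh) => _ _ ->; rewrite hx /mm (negbTE hij).
move: e1; case: (h z) => a q /= ->.
move=> /(congr1 snd); rewrite /Mbr M_lnprod /= => /esym /eqP.
rewrite polyC0 !mul0r subr0 mulr1 mulf_eq0 expf_eq0 !mulf_eq0 !polyC_eq0 oppr_eq0 polyX_eq0 (negbTE hc).
by rewrite !orbF andbF.
Qed.

Lemma decomp (k : fieldType) (L : LieAlg k) (r : nat) (x : 'I_r -> L) (z : L) :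
  is_free_metabelian x -> (2 <= r)%N ->
  Dset z \/ exists c d j, [/\ Dset d, z = \sum_(i < r) c i *: x i + d & c j != 0].
Proof.
move=> hf hr; have [c [d [hd ez]]] := generation hf z.
case: (boolP [exists i, c i != 0]) => [/existsP [j hj]|/existsPn hn].
  by right; exists c, d, j.
left; rewrite ez big1 ?add0r // => i _.
by have := hn i; rewrite negbK => /eqP ->; rewrite scale0r.
Qed.

Lemma nil_D (k : fieldType) (L : LieAlg k) (r : nat) (x : 'I_r -> L) (I : L -> Prop) (y : L) :
  is_free_metabelian x -> (2 <= r)%N -> nilpotent_ideal I -> I y -> Dset y.
Proof.
move=> hf hr [[_ _ _ hI] [n hn]] hy.
case: (decomp y hf hr) => // [[c [d [j [hd ey hc]]]]].
have [w hw] := key n hf hr hd ey hc.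
exfalso; apply: hw; apply: hn; first by rewrite size_nseq.
  exact: hI.
by move=> y'; rewrite mem_nseq => /andP [_ /eqP ->].
Qed.

Lemma FitE (k : fieldType) (L : LieAlg k) (r : nat) (x : 'I_r -> L) (z : L) :
  is_free_metabelian x -> (2 <= r)%N -> Fit z <-> Fit_formula z.
Proof.
move=> hf hr; have hm := proj1 hf; split.
- move=> [s [hs ->]]; apply: D_FF => //.
  elim: s hs => [|a s IH] hs; first by rewrite big_nil; exact: D0.
  rewrite big_cons; apply: DD.
    have [I [hI hIa]] := hs a (mem_head _ _); exact: nil_D hf hr hI hIa.
  by apply: IH => y hy; apply: hs; rewrite inE hy orbT.
- move=> hz; case: (decomp z hf hr) => [|[c [d [j [hd ez hc]]]]]; first exact: D_Fit.
  have [w hw] := key 1 hf hr hd ez hc.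
  by exfalso; apply: hw; rewrite /lnprod /=; exact: hz.
Qed.

Theorem lemma3p4 (k : finFieldType) (r : nat) (L : LieAlg k)
  (x : 'I_r -> L) (n : nat) (b : 'I_n -> L) :
  (2 <= r)%N -> (n <= r)%N -> is_free_metabelian x ->
  phi_formula b <-> lin_indep_mod (@Fit k L) b.
Proof.
move=> hr _ hf; split.
- move=> hphi alpha hF i; apply/eqP; apply/negPn/negP => hi.
  by apply: (hphi alpha); [exists i | exact/(FitE _ hf hr)].
- move=> hl alpha [i hi] hF; have := hl alpha (proj2 (FitE _ hf hr) hF) i.
  by move/eqP; rewrite (negbTE hi).
Qed.
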